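(* For every integer $n\ge 3$, let $G_1$ be the graph obtained from the crown graph $H_{n,n}$ by adding one isolated vertex $v$. Then the co-bipartite graph $\overline{G_1}$ (which is $\overline{H_{n,n}}$ together with a vertex $v$ adjacent to all other vertices) is not word-representable.
   Context: A graph $G=(V,E)$ is word-representable if there exists a word $w$ over the alphabet $V$, containing every letter of $V$ at least once, such that for all distinct $x,y\in V$, the letters $x$ and $y$ alternate in $w$ (i.e., the subword of $w$ obtained by deleting all letters other than $x,y$ has no two equal consecutive letters) if and only if $xy\in E$. The crown graph $H_{n,n}$ is the bipartite graph obtained from the complete bipartite graph $K_{n,n}$ with parts $\{1,\dots,n\}$ and $\{1',\dots,n'\}$ by removing the perfect matching $\{ii' : 1\le i\le n\}$. $\overline{G}$ denotes the complement of $G$; a graph is co-bipartite if its complement is bipartite. *)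

(* Defs.v *)
From mathcomp Require Import all_boot.
Set Implicit Arguments. Unset Strict Implicit. Unset Printing Implicit Defensive.

(* A simple graph is a symmetric irreflexive relation E on a finite vertex type V. *)

Definition alternates (V : eqType) (w : seq V) (x y : V) : bool :=
  sorted (fun a b => a != b) (filter (fun z => (z == x) || (z == y)) w).

Definition word_representable (V : finType) (E : rel V) : Prop :=
  exists w : seq V, (forall x : V, x \in w) /\
    (forall x y : V, x != y -> (alternates w x y <-> E x y)).

Definition complement (V : finType) (E : rel V) : rel V :=
  fun x y => (x != y) && ~~ E x y.

(* Vertices: None = the extra vertex v, Some (inl i) = i, Some (inr i) = i'
   (indices 0..n-1 instead of 1..n). *)
Definition crown_vertex (n : nat) : finType := option ('I_n + 'I_n)%type.

Definition crownG1 (n : nat) : rel (crown_vertex n) :=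
  fun x y =>
    match x, y with
    | Some (inl i), Some (inr j) => i != j
    | Some (inr j), Some (inl i) => i != j
    | _, _ => false
    end.
Arguments crownG1 n x y : clear implicits.

(* Main.v *)
Require Import Defs.
From mathcomp Require Import all_boot.
From mathcomp Require Import all_order all_algebra zify.
Import Order.TTheory GRing.Theory Num.Theory.
Set Implicit Arguments. Unset Strict Implicit.

Section Alt.
Variables (T : eqType) (x y : T).
Hypothesis hxy : x != y.

Definition cnt (w : seq T) (z : T) (t : nat) : int := Posz (count_mem z (take t w)).

Lemma cnt0 w z : cnt w z 0 = 0%R.
Proof. by case: w. Qed.

Lemma cntS a w z t : cnt (a :: w) z t.+1 = (Posz (a == z) + cnt w z t)%R.
Proof. by rewrite /cnt /= PoszD. Qed.

Local Open Scope ring_scope.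

Lemma G w (d : bool) :
  (forall t, 0 <= Posz d + cnt w x t - cnt w y t <= 1) <->
  path (fun a b => a != b) (if d then x else y)
    (filter (fun z => (z == x) || (z == y)) w).
Proof.
elim: w d => [|a w IH] d.
  split => // _ t; rewrite /cnt /=; case: d => /=; lia.
have hyx : y != x by rewrite eq_sym.
rewrite /=; case: (eqVneq a x) => [->|hax].
  rewrite /=.
  split.
  - move=> H; have Hd : d = false.
      by have := H 1%N; rewrite !cntS !cnt0 eqxx; case: (d) => //=; rewrite ?(negbTE hxy) ?(negbTE hyx); lia.
    subst d; rewrite /= hyx /=; apply/(IH true) => t.
    by have := H t.+1; rewrite !cntS eqxx (negbTE hxy) /=; lia.
  - case: d; first by rewrite eqxx.
    move=> /andP [_ hp] [|t]; first by rewrite !cnt0.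
    have := (proj2 (IH true) hp t); rewrite !cntS eqxx (negbTE hxy) /=; lia.
case: (eqVneq a y) => [->|hay].
  rewrite /=.
  split.
  - move=> H; have Hd : d = true.
      by have := H 1%N; rewrite !cntS !cnt0 eqxx; case: (d) => //=; rewrite ?(negbTE hxy) ?(negbTE hyx); lia.
    subst d; rewrite /= hxy /=; apply/(IH false) => t.
    by have := H t.+1; rewrite !cntS eqxx (negbTE hyx) /=; lia.
  - case: d; last by rewrite eqxx.
    move=> /andP [_ hp] [|t]; first by rewrite !cnt0.
    have := (proj2 (IH false) hp t); rewrite !cntS eqxx (negbTE hyx) /=; lia.
rewrite /=.
split.
- move=> H; apply/(IH d) => t.
  by have := H t.+1; rewrite !cntS (negbTE hax) (negbTE hay).
- move=> hp [|t]; first by rewrite !cnt0; case: (d).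
  by rewrite !cntS (negbTE hax) (negbTE hay) !add0r; exact: (proj2 (IH d) hp t).
Qed.

Lemma altE w : alternates w x y <->
  exists d : bool, forall t, 0 <= Posz d + cnt w x t - cnt w y t <= 1.
Proof.
rewrite /alternates.
case Hs: (filter _ w) => [|s0 s] /=.
  split=> // _; exists false; apply/(G w false); by rewrite Hs.
have : s0 \in filter (fun z => (z == x) || (z == y)) w by rewrite Hs mem_head.
have hyx : y != x by rewrite eq_sym.
rewrite mem_filter => /andP [/orP [] /eqP Es0 _]; subst s0.
  split.
    move=> hp; exists false; apply/(G w false); by rewrite Hs /= hyx.
  move=> [d /(G w d)]; rewrite Hs /=; by case/andP.
split.
  move=> hp; exists true; apply/(G w true); by rewrite Hs /= hxy.
move=> [d /(G w d)]; rewrite Hs /=; by case/andP.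
Qed.
End Alt.

Local Open Scope ring_scope.

Definition ev (T : eqType) (w : seq T) v x (dx : bool) (t : nat) : int :=
  1 - Posz dx + cnt w x t - cnt w v t.

Definition R (f g : nat -> int) := forall t, g t <= f t.
Definition comp f g := R f g \/ R g f.

Lemma comp_alt (T : eqType) (w : seq T) v x y (dx dy : bool) :
  (forall t, 0 <= Posz dx + cnt w v t - cnt w x t <= 1) ->
  (forall t, 0 <= Posz dy + cnt w v t - cnt w y t <= 1) ->
  x != y ->
  (alternates w x y <-> comp (ev w v x dx) (ev w v y dy)).
Proof.
move=> Hx Hy hxy; rewrite altE //; rewrite /comp /R /ev.
split.
- move=> [d Hd].
  case: d dx dy Hd Hx Hy => [] [] [] Hd Hx Hy;
  solve [ left; move=> t; have := Hd t; have := Hx t; have := Hy t; lia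
        | right; move=> t; have := Hd t; have := Hx t; have := Hy t; lia ].
- move=> [] H; have := H 0%N; rewrite !cnt0;
  case: dx dy Hx Hy H => [] [] Hx Hy H /= H0;
  first [ lia |
    solve [ exists false; move=> t; have := H t; have := Hx t; have := Hy t; lia
          | exists true; move=> t; have := H t; have := Hx t; have := Hy t; lia ] ].
Qed.

Lemma prism (f0 f1 f2 g0 g1 g2 : nat -> int) :
  comp f0 f1 -> comp f0 f2 -> comp f1 f2 ->
  comp f0 g0 -> comp f1 g1 -> comp f2 g2 ->
  ~ comp f0 g1 -> ~ comp f0 g2 -> ~ comp f1 g0 ->
  ~ comp f1 g2 -> ~ comp f2 g0 -> ~ comp f2 g1 -> False.
Proof.
have Rt : forall a b c, R a b -> R b c -> R a c.
  move=> a b c H1 H2 t; exact: le_trans (H2 t) (H1 t).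
rewrite /comp.
move=> [?|?] [?|?] [?|?] [?|?] [?|?] [?|?] N1 N2 N3 N4 N5 N6;
  solve [ match goal with N : ~ (R ?a ?b \/ R ?b ?a) |- _ =>
      apply: N; solve [left; eauto | right; eauto] end ].
Qed.

Local Close Scope ring_scope.

Theorem mainTheorem7 (n : nat) : 3 <= n ->
  ~ word_representable (complement (crownG1 n)).
Proof.
move=> n3 [w [_ Hw]].
have h0 : (0 < n)%N by lia.
have h1 : (1 < n)%N by lia.
have h2 : (2 < n)%N by lia.
pose i0 : 'I_n := Ordinal h0.
pose i1 : 'I_n := Ordinal h1.
pose i2 : 'I_n := Ordinal h2.
pose a i : crown_vertex n := Some (inl i).
pose b i : crown_vertex n := Some (inr i).
pose v : crown_vertex n := None.
have getd : forall x : crown_vertex n, x != v ->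
    exists d : bool, forall t, (0 <= Posz d + cnt w v t - cnt w x t <= 1)%R.
  move=> x hx; apply/altE; first by rewrite eq_sym.
  apply/(Hw v x); first by rewrite eq_sym.
  by rewrite /complement eq_sym hx; case: x hx.
have [da0 Ha0] := getd (a i0) isT.
have [da1 Ha1] := getd (a i1) isT.
have [da2 Ha2] := getd (a i2) isT.
have [db0 Hb0] := getd (b i0) isT.
have [db1 Hb1] := getd (b i1) isT.
have [db2 Hb2] := getd (b i2) isT.
have C := fun x y dx dy Hx Hy hxy => proj1 (@comp_alt _ w v x y dx dy Hx Hy hxy).
have NC := fun x y dx dy Hx Hy hxy => proj2 (@comp_alt _ w v x y dx dy Hx Hy hxy).
apply: (@prism (ev w v (a i0) da0) (ev w v (a i1) da1) (ev w v (a i2) da2)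
                (ev w v (b i0) db0) (ev w v (b i1) db1) (ev w v (b i2) db2)).
- by apply: C => //; apply/Hw.
- by apply: C => //; apply/Hw.
- by apply: C => //; apply/Hw.
- by apply: C => //; apply/Hw.
- by apply: C => //; apply/Hw.
- by apply: C => //; apply/Hw.
- by move/(NC (a i0) (b i1) _ _ Ha0 Hb1 isT)/(Hw (a i0) (b i1) isT).
- by move/(NC (a i0) (b i2) _ _ Ha0 Hb2 isT)/(Hw (a i0) (b i2) isT).
- by move/(NC (a i1) (b i0) _ _ Ha1 Hb0 isT)/(Hw (a i1) (b i0) isT).
- by move/(NC (a i1) (b i2) _ _ Ha1 Hb2 isT)/(Hw (a i1) (b i2) isT).
- by move/(NC (a i2) (b i0) _ _ Ha2 Hb0 isT)/(Hw (a i2) (b i0) isT).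
- by move/(NC (a i2) (b i1) _ _ Ha2 Hb1 isT)/(Hw (a i2) (b i1) isT).
Qed.
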